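(* Let $$y=\frac{9s(2s^3-3s+4)}{4(s+1)(s-1)^2(2s^2+6s+1)},\qquad t=\frac{27s^2}{4(s^2-1)^3}.$$ Then $y(t)$ is a solution of $\mathrm{P}_{\mathrm{VI}}$ with parameters $(\theta_1,\theta_2,\theta_3,\theta_4)=(1/2,1/2,1/4,2/3)$.
   Context: $\mathrm{P}_{\mathrm{VI}}$ is the equation $$\frac{d^2y}{dt^2}=\frac12\Big(\frac1y+\frac1{y-1}+\frac1{y-t}\Big)\Big(\frac{dy}{dt}\Big)^2-\Big(\frac1t+\frac1{t-1}+\frac1{y-t}\Big)\frac{dy}{dt}+\frac{y(y-1)(y-t)}{t^2(t-1)^2}\Big(\alpha+\beta\frac{t}{y^2}+\gamma\frac{t-1}{(y-1)^2}+\delta\frac{t(t-1)}{(y-t)^2}\Big),$$ with $\alpha=(\theta_4-1)^2/2$, $\beta=-\theta_1^2/2$, $\gamma=\theta_3^2/2$, $\delta=(1-\theta_2^2)/2$. When $y,t$ are given as rational functions of a parameter on a curve, derivatives with respect to $t$ are computed via the chain rule. *)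

(* Defs.v *)
From Stdlib Require Import Reals.
From Coquelicot Require Import Coquelicot.
Open Scope R_scope.

Definition PVI_alpha (th4 : R) : R := (th4 - 1) ^ 2 / 2.
Definition PVI_beta  (th1 : R) : R := - (th1 ^ 2) / 2.
Definition PVI_gamma (th3 : R) : R := th3 ^ 2 / 2.
Definition PVI_delta (th2 : R) : R := (1 - th2 ^ 2) / 2.

(* Right-hand side of P_VI: y'' = PVI_rhs t y y' *)
Definition PVI_rhs (th1 th2 th3 th4 t y y1 : R) : R :=
  / 2 * (/ y + / (y - 1) + / (y - t)) * y1 ^ 2
  - (/ t + / (t - 1) + / (y - t)) * y1
  + y * (y - 1) * (y - t) / (t ^ 2 * (t - 1) ^ 2)
    * (PVI_alpha th4 + PVI_beta th1 * t / y ^ 2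
       + PVI_gamma th3 * (t - 1) / (y - 1) ^ 2
       + PVI_delta th2 * t * (t - 1) / (y - t) ^ 2).

(* For a curve s |-> (T s, Y s), the derivatives of y with respect to t
   computed by the chain rule: dy/dt = Y'/T', d^2y/dt^2 = (dy/dt)'/T'. *)
Definition dydt (Y T : R -> R) (s : R) : R := Derive Y s / Derive T s.
Definition d2ydt2 (Y T : R -> R) (s : R) : R := Derive (dydt Y T) s / Derive T s.

Definition solves_PVI_at (th1 th2 th3 th4 : R) (Y T : R -> R) (s : R) : Prop :=
  d2ydt2 Y T s = PVI_rhs th1 th2 th3 th4 (T s) (Y s) (dydt Y T s).

Definition Ysol (s : R) : R :=
  9 * s * (2 * s ^ 3 - 3 * s + 4) /
  (4 * (s + 1) * (s - 1) ^ 2 * (2 * s ^ 2 + 6 * s + 1)).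
Definition Tsol (s : R) : R := 27 * s ^ 2 / (4 * (s ^ 2 - 1) ^ 3).

(* Main.v *)
Require Import Defs.
From Stdlib Require Import Reals Lra.
From Coquelicot Require Import Coquelicot.
Open Scope R_scope.

Definition Nn x := 9 * x * (2 * x ^ 3 - 3 * x + 4).
Definition Nd x := 4 * (x + 1) * (x - 1) ^ 2 * (2 * x ^ 2 + 6 * x + 1).
Definition Nn1 x := 9 * (2 * x ^ 3 - 3 * x + 4) + 9 * x * (6 * x ^ 2 - 3).
Definition Nn2 x := 18 * (6 * x ^ 2 - 3) + 9 * x * (12 * x).
Definition Nd1 x := 4 * (x - 1) ^ 2 * (2 * x ^ 2 + 6 * x + 1)
  + 4 * (x + 1) * (2 * (x - 1)) * (2 * x ^ 2 + 6 * x + 1)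
  + 4 * (x + 1) * (x - 1) ^ 2 * (4 * x + 6).
Definition Nd2 x := 8 * (x - 1) * (2 * x ^ 2 + 6 * x + 1)
  + 4 * (x - 1) ^ 2 * (4 * x + 6)
  + 8 * (x - 1) * (2 * x ^ 2 + 6 * x + 1)
  + 8 * (x + 1) * (2 * x ^ 2 + 6 * x + 1)
  + 8 * (x + 1) * (x - 1) * (4 * x + 6)
  + 8 * (x + 1) * (x - 1) * (4 * x + 6)
  + 4 * (x - 1) ^ 2 * (4 * x + 6)
  + 16 * (x + 1) * (x - 1) ^ 2.
Definition Y1 x := (Nn1 x * Nd x - Nn x * Nd1 x) / Nd x ^ 2.
Definition Y1d x := ((Nn2 x * Nd x - Nn x * Nd2 x) * Nd x ^ 2
   - (Nn1 x * Nd x - Nn x * Nd1 x) * (2 * Nd x * Nd1 x)) / Nd x ^ 4.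
Definition T1 x := -27 * (2 * x ^ 3 + x) / (2 * (x ^ 2 - 1) ^ 4).
Definition T1d x := (-27 * (6 * x ^ 2 + 1) * (2 * (x ^ 2 - 1) ^ 4)
   - (-27 * (2 * x ^ 3 + x)) * (16 * x * (x ^ 2 - 1) ^ 3)) / (2 * (x ^ 2 - 1) ^ 4) ^ 2.

Definition good x := x <> 1 /\ x <> -1 /\ 2 * x ^ 2 + 6 * x + 1 <> 0.

Lemma sq1 x : x <> 1 -> x <> -1 -> x ^ 2 - 1 <> 0.
Proof. intros. replace (x^2-1) with ((x-1)*(x+1)) by ring.
apply Rmult_integral_contrapositive; split; lra. Qed.

Ltac nz := repeat first [ assumption | lra | progress (repeat split)
  | apply Rmult_integral_contrapositive_currified | apply pow_nonzero
  | apply Rinv_neq_0_compat ].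

Lemma dY x : good x -> is_derive Ysol x (Y1 x).
Proof. intros [h1 [h2 h3]]. unfold Ysol, Y1, Nn, Nd, Nn1, Nd1.
auto_derive; [nz | field; nz].
Qed.

Lemma dT x : x <> 1 -> x <> -1 -> is_derive Tsol x (T1 x).
Proof. intros h1 h2. pose proof (sq1 x h1 h2) as h. unfold Tsol, T1.
auto_derive; [nz | field; nz].
Qed.

Lemma dY1 x : good x -> is_derive Y1 x (Y1d x).
Proof. intros [h1 [h2 h3]]. unfold Y1, Y1d, Nn, Nd, Nn1, Nd1, Nn2, Nd2.
auto_derive; [nz | field; nz].
Qed.

Lemma dT1 x : x <> 1 -> x <> -1 -> is_derive T1 x (T1d x).
Proof. intros h1 h2. pose proof (sq1 x h1 h2) as h. unfold T1, T1d.
auto_derive; [nz | field; nz].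
Qed.

Lemma loc_neq (f : R -> R) s : continuous f s -> f s <> 0 -> locally s (fun x => f x <> 0).
Proof. intros Hc Hs. unfold continuous, filterlim, filter_le, filtermap in Hc.
apply (Hc (fun u => u <> 0)). apply (open_neq 0). exact Hs. Qed.

Lemma loc_good s : good s -> locally s good.
Proof. intros [h1 [h2 h3]]. unfold good.
apply filter_and; [|apply filter_and].
- apply (filter_imp (fun x => x - 1 <> 0)); [intros; lra|].
  apply (loc_neq (fun x => x - 1)); [apply continuity_pt_filterlim; reg | lra].
- apply (filter_imp (fun x => x + 1 <> 0)); [intros; lra|].
  apply (loc_neq (fun x => x + 1)); [apply continuity_pt_filterlim; reg | lra].
- apply (loc_neq (fun x => 2 * x ^ 2 + 6 * x + 1)); [apply continuity_pt_filterlim; reg | lra].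
Qed.

Lemma loc_dydt s : good s -> locally s (fun x => dydt Ysol Tsol x = Y1 x / T1 x).
Proof. intro g. apply (filter_imp good); [|apply loc_good; auto].
intros x gx. unfold dydt. destruct gx as [a [b c]].
rewrite (is_derive_unique _ _ _ (dY x (conj a (conj b c)))).
rewrite (is_derive_unique _ _ _ (dT x a b)). reflexivity.
Qed.

Lemma d2 s : good s -> T1 s <> 0 -> d2ydt2 Ysol Tsol s =
  ((Y1d s * T1 s - Y1 s * T1d s) / T1 s ^ 2) / T1 s.
Proof. intros g h. unfold d2ydt2.
rewrite (Derive_ext_loc _ (fun x => Y1 x / T1 x) s (loc_dydt s g)).
destruct g as [a [b c]].
f_equal; apply is_derive_unique; [exact (is_derive_div _ _ _ _ _ (dY1 s (conj a (conj b c))) (dT1 s a b) h) | exact (dT s a b)].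
Qed.

Theorem mainTheorem6 : forall s : R,
  s <> 0 -> s <> 1 -> s <> -1 -> 2 * s ^ 2 + 6 * s + 1 <> 0 ->
  Derive Tsol s <> 0 ->
  Tsol s <> 1 -> Ysol s <> 0 -> Ysol s <> 1 -> Ysol s <> Tsol s ->
  solves_PVI_at (1/2) (1/2) (1/4) (2/3) Ysol Tsol s.
Proof.
intros s h0 h1 h2 h3 hD ht1 hy0 hy1 hyt.
assert (g : good s) by (repeat split; auto).
assert (hT1 : T1 s <> 0) by (rewrite <- (is_derive_unique _ _ _ (dT s h1 h2)); exact hD).
pose proof (sq1 s h1 h2) as hq.
assert (hNd : Nd s <> 0) by (unfold Nd; nz).
assert (EY : Ysol s = Nn s / Nd s) by reflexivity.
assert (hq3 : 4 * (s ^ 2 - 1) ^ 3 <> 0) by nz.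
assert (ET : Tsol s = 27 * s ^ 2 / (4 * (s ^ 2 - 1) ^ 3)) by reflexivity.
assert (hNn : Nn s <> 0).
{ intro E. apply hy0. rewrite EY, E. field. auto. }
assert (E1 : Ysol s - 1 = (Nn s - Nd s) / Nd s) by (rewrite EY; field; auto).
assert (hN1 : Nn s - Nd s <> 0).
{ intro E. apply hy1. apply Rminus_diag_uniq. rewrite E1, E. field. auto. }
assert (E2 : Tsol s - 1 = (27 * s ^ 2 - 4 * (s ^ 2 - 1) ^ 3) / (4 * (s ^ 2 - 1) ^ 3)) by (rewrite ET; field; auto).
assert (hN2 : 27 * s ^ 2 - 4 * (s ^ 2 - 1) ^ 3 <> 0).
{ intro E. apply ht1. apply Rminus_diag_uniq. rewrite E2, E. field. auto. }
assert (E3 : Ysol s - Tsol s = (Nn s * (4 * (s ^ 2 - 1) ^ 3) - 27 * s ^ 2 * Nd s) / (Nd s * (4 * (s ^ 2 - 1) ^ 3))) by (rewrite EY, ET; field; auto).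
assert (hN3 : Nn s * (4 * (s ^ 2 - 1) ^ 3) - 27 * s ^ 2 * Nd s <> 0).
{ intro E. apply hyt. apply Rminus_diag_uniq. rewrite E3, E. field. auto. }
unfold solves_PVI_at. rewrite (d2 s g hT1).
assert (ED : dydt Ysol Tsol s = Y1 s / T1 s).
{ unfold dydt. rewrite (is_derive_unique _ _ _ (dY s g)), (is_derive_unique _ _ _ (dT s h1 h2)). reflexivity. }
rewrite ED. unfold PVI_rhs. rewrite E1, E2, E3, EY, ET.
unfold PVI_alpha, PVI_beta, PVI_gamma, PVI_delta.
unfold Y1, Y1d, T1, T1d, Nn1, Nn2, Nd1, Nd2.
unfold T1 in hT1.
unfold Nn, Nd in *.
assert (hA : 2 * s ^ 3 - 3 * s + 4 <> 0).
{ intro E. apply hNn. rewrite E. ring. }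
assert (hB : 2 * s ^ 3 + s <> 0).
{ intro E. apply hT1. rewrite E. field. auto. }
field. repeat split; try assumption; lra.
Qed.
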